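(* Let $r\ge 2$ and $1\le p\le r-1$ be integers, let $H=(V,\mathcal{E})$ be an $r$-uniform hypergraph, and let $V_1,\dots,V_k$ be (not necessarily disjoint) subsets of $V$ with $\bigcup_{i=1}^k V_i = V$. Let $H_i = H[V_i]$ for $1\le i\le k$. Then \[\overrightarrow{\Gamma}_p(H) \le \sum_{i=1}^k \overrightarrow{\Gamma}_p(H_i).\]
   Context: For $U\subseteq V$, the induced subhypergraph $H[U]$ has vertex set $U$ and edge set consisting of all $E\in\mathcal{E}$ with $E\subseteq U$. An orientation $D$ of an $r$-uniform hypergraph $H=(V,\mathcal{E})$ assigns to each edge exactly one of the $r!$ linear orderings of its elements. A set $S\subseteq V$ is a directed $p$-dominating set of $D$ if for every vertex $u\in V\setminus S$ there is an edge $E$ with $u\in E$ whose first $p$ vertices (in the ordering given by $D$) all lie in $S$; if $H$ has no edges containing $u$, then $u$ must lie in $S$ (e.g. for an edgeless hypergraph $S=V$ is forced). $\overrightarrow{\gamma}_p(D)$ is the minimum cardinality of a directed $p$-dominating set of $D$, and $\overrightarrow{\Gamma}_p(H)$ is the maximum of $\overrightarrow{\gamma}_p(D)$ over all orientations $D$ of $H$. *)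

(* Defs.v *)
From mathcomp Require Import all_boot.
Set Implicit Arguments. Unset Strict Implicit. Unset Printing Implicit Defensive.

(* A hypergraph on the finite vertex type T is given by a vertex set U and an
   edge set F : {set {set T}} (each edge a subset of U).  An orientation of an
   r-uniform hypergraph assigns to each edge e a linear ordering of its
   elements, represented by a duplicate-free r-tuple whose underlying set is e.
   (Values of D on non-edges are irrelevant.) *)

Definition is_orientation (T : finType) (r : nat) (F : {set {set T}})
  (D : {ffun {set T} -> r.-tuple T}) : bool :=
  [forall e in F, uniq (D e) && ([set x in (D e : seq T)] == e)].

Definition is_dir_pdom (T : finType) (r p : nat) (U : {set T})
  (F : {set {set T}}) (D : {ffun {set T} -> r.-tuple T}) (S : {set T}) : bool :=
  (S \subset U) &&
  [forall u in U :\: S,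
     [exists e in F, (u \in e) && all (fun x => x \in S) (take p (D e))]].

(* gamma_p(D): minimum cardinality of a directed p-dominating set
   (U itself is always one, so #|U| is a valid default). *)
Definition dir_gamma (T : finType) (r p : nat) (U : {set T})
  (F : {set {set T}}) (D : {ffun {set T} -> r.-tuple T}) : nat :=
  \big[minn/#|U|]_(S : {set T} | is_dir_pdom p U F D S) #|S|.

Definition dir_Gamma (T : finType) (r p : nat) (U : {set T})
  (F : {set {set T}}) : nat :=
  \max_(D : {ffun {set T} -> r.-tuple T} | is_orientation F D) dir_gamma p U F D.

Definition induced_edges (T : finType) (F : {set {set T}}) (W : {set T})
  : {set {set T}} := [set e in F | e \subset W].

(* Main.v *)
Require Import Defs.
From mathcomp Require Import all_boot.

Lemma bigmin_le_seq (I : eqType) (s : seq I) (P : pred I) (F : I -> nat) x i0 :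
  i0 \in s -> P i0 -> \big[minn/x]_(i <- s | P i) F i <= F i0.
Proof.
elim: s => [|y s IH] //= Hin HP; rewrite big_cons.
move: Hin; rewrite in_cons => /orP [/eqP <-|Hin].
  by rewrite HP geq_minl.
case: (P y); last exact: IH.
by apply: leq_trans (geq_minr _ _) (IH Hin HP).
Qed.

Lemma dir_gamma_le (T : finType) r p U F (D : {ffun {set T} -> r.-tuple T}) S :
  is_dir_pdom p U F D S -> dir_gamma p U F D <= #|S|.
Proof.
move=> HS; rewrite /dir_gamma.
by apply: bigmin_le_seq => //; rewrite mem_index_enum.
Qed.

Lemma dir_gamma_ex (T : finType) r p U F (D : {ffun {set T} -> r.-tuple T}) :
  exists S, is_dir_pdom p U F D S /\ #|S| <= dir_gamma p U F D.
Proof.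
rewrite /dir_gamma.
apply: (big_ind (fun m => exists S, is_dir_pdom p U F D S /\ #|S| <= m)).
- exists U; split => //; rewrite /is_dir_pdom subxx /=.
  by apply/forall_inP => u; rewrite setDv inE.
- move=> a b [Sa [Ha Ha']] [Sb [Hb Hb']].
  case: (leqP a b) => Hab.
    by exists Sa; split => //; rewrite (minn_idPl Hab).
  by exists Sb; split => //; rewrite (minn_idPr (ltnW Hab)).
- by move=> S HS; exists S.
Qed.

Lemma card_bigcup_seq (T : finType) (I : Type) (s : seq I) (A : I -> {set T}) :
  #|\bigcup_(i <- s) A i| <= \sum_(i <- s) #|A i|.
Proof.
elim: s => [|y s IH]; first by rewrite !big_nil cards0.
rewrite !big_cons cardsU; apply: leq_trans (leq_subr _ _) _.
by rewrite leq_add2l.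
Qed.

Theorem mainTheorem3 (T : finType) (r p : nat) (E : {set {set T}})
  (k : nat) (Vs : 'I_k -> {set T}) :
  2 <= r -> 1 <= p <= r - 1 ->
  (forall e, e \in E -> #|e| = r) ->
  \bigcup_(i < k) Vs i = [set: T] ->
  dir_Gamma r p [set: T] E <=
    \sum_(i < k) dir_Gamma r p (Vs i) (induced_edges E (Vs i)).
Proof.
move=> _ _ _ Hcov.
rewrite /dir_Gamma.
apply/bigmax_leqP => D HD.
have [Sf HSf] := fin_all_exists (fun i =>
   @dir_gamma_ex T r p (Vs i) (induced_edges E (Vs i)) D).
set S := \bigcup_(i < k) Sf i.
have HS : is_dir_pdom p [set: T] E D S.
  rewrite /is_dir_pdom subsetT /=.
  apply/forall_inP => u; rewrite inE => /andP [uS _].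
  have : u \in [set: T] by rewrite inE.
  rewrite -Hcov => /bigcupP [i _ uVi].
  have [Hi _] := HSf i.
  move: Hi => /andP [_ /forall_inP Hi].
  have uSi : u \notin Sf i.
    apply: contra uS => uSi; apply/bigcupP; by exists i.
  have /Hi /existsP [e /andP [eF /andP [ue Hall]]] : u \in Vs i :\: Sf i
    by rewrite inE uSi uVi.
  apply/existsP; exists e; rewrite ue /=.
  move: eF; rewrite inE => /andP [-> _] /=.
  apply/allP => x /(allP Hall) xS; apply/bigcupP; by exists i.
apply: leq_trans (@dir_gamma_le T r p _ _ _ _ HS) _.
apply: leq_trans (@card_bigcup_seq T _ (index_enum 'I_k) Sf) _.
rewrite big_seq_cond [X in _ <= X]big_seq_cond.
apply: leq_sum => i _.
have := HSf i => -[_ Hle].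
rewrite -[X in _ <= X]/(\max_(D0 | is_orientation (induced_edges E (Vs i)) D0) dir_gamma p (Vs i) (induced_edges E (Vs i)) D0).
apply: leq_trans Hle _.
apply: (@leq_bigmax_cond _ (fun D0 => is_orientation (induced_edges E (Vs i)) D0) (fun D0 => dir_gamma p (Vs i) (induced_edges E (Vs i)) D0) D).
apply/forall_inP => e; rewrite inE => /andP [eE _].
by move/forall_inP: HD => /(_ e eE).
Qed.
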